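(* Let $T_{a_1\dots a_r}$ be a rank-$r$ tensor and $i\in\{1,\dots,r\}$. Then $(T\,{}_i\!\times_i T)=0$ if and only if there exist a null vector $k$ (or $T=0$) and a rank-$(r-1)$ tensor $t$ such that $T_{a_1\dots a_r}=k_{a_i}\,t_{a_1\dots a_{i-1}a_{i+1}\dots a_r}$.
   Context: Lorentzian metric of signature $(+,-,\dots,-)$; null: $k\ne0$, $k\cdot k=0$. $(T\,{}_i\!\times_i T)_{a_1\dots a_{2r-2}}$ denotes the tensor obtained from $T\otimes T$ by contracting the $i$-th index of the first factor with the $i$-th index of the second factor, all other indices kept in order: $T_{a_1\dots a_{i-1}ba_i\dots a_{r-1}}T_{a_r\dots a_{r+i-2}}{}^{b}{}_{a_{r+i-1}\dots a_{2r-2}}$. *)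

(* Defs.v *)
From HB Require Import structures.
From mathcomp Require Import all_boot all_order all_algebra.
Set Implicit Arguments. Unset Strict Implicit. Unset Printing Implicit Defensive.
Import Order.TTheory GRing.Theory Num.Theory.
Local Open Scope ring_scope.

(* Spacetime dimension n, index set 'I_n; index 0 is the time direction.
   Minkowski metric eta = diag(+1,-1,...,-1) (it is its own inverse). *)
Definition eta (R : nzRingType) (n : nat) (b : 'I_n) : R :=
  if val b == 0%N then 1 else -1.

Definition vec (R : nzRingType) (n : nat) := {ffun 'I_n -> R}.
Definition multi_index (n r : nat) := {ffun 'I_r -> 'I_n}.
Definition tensor (R : nzRingType) (n r : nat) := {ffun multi_index n r -> R}.

Definition ldot (R : nzRingType) (n : nat) (k l : vec R n) : R :=
  \sum_(b < n) eta R b * k b * l b.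

Definition is_null (R : nzRingType) (n : nat) (k : vec R n) : Prop :=
  k <> 0 /\ ldot k k = 0.

Definition ins_index (n r : nat) (i : 'I_r.+1) (b : 'I_n) (a : multi_index n r)
  : multi_index n r.+1 :=
  [ffun m => match unlift i m with None => b | Some m' => a m' end].

Definition del_index (n r : nat) (i : 'I_r.+1) (a : multi_index n r.+1)
  : multi_index n r := [ffun m => a (lift i m)].

Definition fst_half (n r : nat) (a : multi_index n (r + r)) : multi_index n r :=
  [ffun m => a (lshift r m)].
Definition snd_half (n r : nat) (a : multi_index n (r + r)) : multi_index n r :=
  [ffun m => a (rshift r m)].

(* (T _i x_i T)_{a_1...a_{2r-2}} =
   T_{a_1..a_{i-1} b a_i..a_{r-1}} eta^{bc} T_{a_r..a_{r+i-2} c a_{r+i-1}..a_{2r-2}} *)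
Definition contract (R : nzRingType) (n r : nat) (i : 'I_r.+1) (T : tensor R n r.+1)
  : tensor R n (r + r) :=
  [ffun a => \sum_(b < n) eta R b * T (ins_index i b (fst_half a))
                                  * T (ins_index i b (snd_half a))].

(* Main.v *)
Require Import Defs.
From HB Require Import structures.
From mathcomp Require Import all_boot all_order all_algebra.
From mathcomp Require Import ring.
Import Order.TTheory GRing.Theory Num.Theory.
Local Open Scope ring_scope.

Lemma sqsum0 (R : realFieldType) m (f : 'I_m -> R) :
  \sum_j f j ^+ 2 = 0 -> forall j, f j = 0.
Proof.
move=> h j; have := psumr_eq0P (P := xpredT) (fun j _ => sqr_ge0 (f j)) h isT.
move=> /(_ j) /eqP; rewrite sqrf_eq0 => /eqP; exact.
Qed.

Lemma ldotE (R : realFieldType) n (u v : vec R n.+1) :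
  ldot u v = u ord0 * v ord0 - \sum_j u (lift ord0 j) * v (lift ord0 j).
Proof.
rewrite /ldot big_ord_recl /eta /= mul1r; congr (_ + _).
rewrite -sumrN; apply: eq_bigr => j _; by rewrite mulN1r mulNr.
Qed.

Lemma iso_prop (R : realFieldType) n (u v : vec R n) :
  u <> 0 -> ldot u u = 0 -> ldot u v = 0 -> ldot v v = 0 ->
  exists c, forall b, v b = c * u b.
Proof.
case: n u v => [|n] u v hu.
  by exfalso; apply: hu; apply/ffunP => -[].
rewrite !ldotE => /eqP; rewrite subr_eq0 => /eqP huu.
move=> /eqP; rewrite subr_eq0 => /eqP huv.
move=> /eqP; rewrite subr_eq0 => /eqP hvv.
have u0 : u ord0 != 0.
  apply/eqP => h0; apply: hu; apply/ffunP => b; rewrite ffunE.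
  have hs : \sum_j u (lift ord0 j) ^+ 2 = 0.
    by rewrite -[RHS](mulr0 0) -{2 3}h0 huu; apply: eq_bigr => j _; rewrite expr2.
  case: (unliftP ord0 b) => [j ->|->] //; exact: sqsum0 hs j.
have hw : \sum_j (v ord0 * u (lift ord0 j) - u ord0 * v (lift ord0 j)) ^+ 2 = 0.
  transitivity (v ord0 ^+ 2 * \sum_j u (lift ord0 j) * u (lift ord0 j)
    - 2 * (u ord0 * v ord0) * \sum_j u (lift ord0 j) * v (lift ord0 j)
    + u ord0 ^+ 2 * \sum_j v (lift ord0 j) * v (lift ord0 j)).
    rewrite !mulr_sumr -sumrB -big_split /=; apply: eq_bigr => j _; ring.
  rewrite -huu -huv -hvv; ring.
exists (v ord0 / u ord0) => b.
case: (unliftP ord0 b) => [j ->|->]; last by rewrite divfK.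
have := @sqsum0 _ _ (fun j => v ord0 * u (lift ord0 j) - u ord0 * v (lift ord0 j)) hw j => /eqP; rewrite subr_eq0 => /eqP h.
by rewrite mulrAC h mulrAC divff // mul1r.
Qed.

Lemma ins_del n r (i : 'I_r.+1) (a : multi_index n r.+1) :
  ins_index i (a i) (del_index i a) = a.
Proof.
apply/ffunP => m; rewrite ffunE.
by case: (unliftP i m) => [m' ->|->]; rewrite ?ffunE.
Qed.

Lemma ins_at n r (i : 'I_r.+1) b (A : multi_index n r) : ins_index i b A i = b.
Proof. by rewrite ffunE unlift_none. Qed.

Lemma del_ins n r (i : 'I_r.+1) b (A : multi_index n r) :
  del_index i (ins_index i b A) = A.
Proof. by apply/ffunP => m; rewrite !ffunE liftK. Qed.

Theorem mainTheorem14 (R : realFieldType) (n r : nat)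
    (T : tensor R n r.+1) (i : 'I_r.+1) :
  contract i T = 0 <->
  exists (k : vec R n) (t : tensor R n r),
    (is_null k \/ T = 0) /\
    (forall a : multi_index n r.+1, T a = k (a i) * t (del_index i a)).
Proof.
pose col (A : multi_index n r) : vec R n := [ffun b => T (ins_index i b A)].
split=> [hc|].
  have hd : forall A B, ldot (col A) (col B) = 0.
    move=> A B.
    pose a : multi_index n (r + r) :=
      [ffun m => match split m with inl x => A x | inr y => B y end].
    have hA : fst_half a = A by apply/ffunP => m; rewrite !ffunE (unsplitK (inl _)).
    have hB : snd_half a = B by apply/ffunP => m; rewrite !ffunE (unsplitK (inr _)).
    have := congr1 (fun f : tensor R n (r + r) => f a) hc; rewrite /= !ffunE hA hB => <-.
    by rewrite /ldot; apply: eq_bigr => b _; rewrite !ffunE.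
  case: (pickP (fun A => col A != 0)) => [A0 hA0|hnone]; last first.
    have hT0 : T = 0.
      apply/ffunP => a; rewrite ffunE.
      have := hnone (del_index i a) => /negbFE/eqP/ffunP/(_ (a i)).
      by rewrite !ffunE ins_del.
    exists 0, 0; split; first by right.
    by move=> a; rewrite hT0 !ffunE mul0r.
  have hk : col A0 <> 0 by apply/eqP.
  have hc' : forall A, exists c, [forall b, col A b == c * col A0 b].
    move=> A; have [c hc2] := @iso_prop _ _ _ _ hk (hd _ _) (hd A0 A) (hd _ _).
    by exists c; apply/forallP => b; rewrite hc2.
  pose t : tensor R n r := [ffun A => xchoose (hc' A)].
  exists (col A0), t; split; first by left; split.
  move=> a; rewrite mulrC ffunE.
  have /forallP/(_ (a i))/eqP := xchooseP (hc' (del_index i a)).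
  by rewrite !ffunE ins_del.
move=> [k [t [hk hT]]].
apply/ffunP => a; rewrite !ffunE.
case: hk => [[_ hkk]|->]; last by apply: big1 => b _; rewrite !ffunE !mulr0.
rewrite (eq_bigr (fun b : 'I_n => t (fst_half a) * t (snd_half a) * (Defs.eta R b * k b * k b))).
  by rewrite -mulr_sumr -/(ldot k k) hkk mulr0.
by move=> b _; rewrite !hT !ins_at !del_ins; ring.
Qed.
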